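(* Let $\ell$ be a kernel on a set $X$ with the multiplier separation property. Then $\ell$ has the automatic separation property.
   Context: A kernel on $X$ is a positive semi-definite function $\ell:X\times X\to\mathbb{C}$ (with $\ell_z\ne0$ for all $z$); $\mathcal{H}_\ell$ its reproducing kernel Hilbert space, $\ell_w=\ell(\cdot,w)$, $\hat\ell_w=\ell_w/\|\ell_w\|$, $d_\ell(z,w)=\sqrt{1-|\langle\hat\ell_z,\hat\ell_w\rangle|^2}$. $\mathrm{Mult}(\mathcal{H}_\ell)$ is the algebra of functions $\phi$ with $f\mapsto\phi f$ bounded on $\mathcal{H}_\ell$, normed by the operator norm. $\ell$ has the multiplier separation property if for every $\delta>0$ there is $\epsilon>0$ such that for any two points $\lambda\ne\mu$ in $X$ with $d_\ell(\lambda,\mu)>\delta$ there is $\phi\in\mathrm{Mult}(\mathcal{H}_\ell)$ of norm at most $1$ with $\phi(\lambda)=\epsilon$ and $\phi(\mu)=0$. A sequence $\{\lambda_i\}$ is weakly separated by $\ell$ if $d_\ell(\lambda_i,\lambda_j)\ge\epsilon>0$ for $i\ne j$; for $n\ge2$ it is $n$-weakly separated by $\ell$ if there is $\epsilon>0$ such that for every $n$-point subset $\{\mu_1,\dots,\mu_n\}$ of it, $\mathrm{dist}(\hat\ell_{\mu_1},\mathrm{span}\{\hat\ell_{\mu_2},\dots,\hat\ell_{\mu_n}\})\ge\epsilon$. $\ell$ has the automatic separation property if every sequence weakly separated by $\ell$ is $n$-weakly separated by $\ell$ for every $n\ge3$. *)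

(* Defs.v *)
From HB Require Import structures.
From mathcomp Require Import all_boot all_order all_algebra.
From mathcomp Require Import reals.
From mathcomp Require Import complex.
Set Implicit Arguments. Unset Strict Implicit. Unset Printing Implicit Defensive.
Import Order.TTheory GRing.Theory Num.Theory.
Local Open Scope ring_scope.
Local Open Scope complex_scope.

Section RKHS.
Variables (R : realType) (X : Type) (l : X -> X -> R[i]).

(* Squared norm of the vector  sum_j b_j l_{x_j}  in H_l:
   < sum_j b_j l_{x_j}, sum_i b_i l_{x_i} > = sum_{i,j} conj(b_i) b_j l(x_i,x_j),
   using <l_w, l_z> = l_w(z) = l(z,w). *)
Definition kform (n : nat) (x : 'I_n -> X) (b : 'I_n -> R[i]) : R[i] :=
  \sum_(i < n) \sum_(j < n) (b i)^* * b j * l (x i) (x j).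

Definition combo_norm (n : nat) (x : 'I_n -> X) (b : 'I_n -> R[i]) : R[i] :=
  sqrtC (kform x b).

(* l is a kernel: positive semi-definite, and l_z <> 0 for every z. *)
Definition is_kernel : Prop :=
  (forall (n : nat) (x : 'I_n -> X) (a : 'I_n -> R[i]), 0 <= kform x a) /\
  (forall z : X, exists w : X, l w z != 0).

(* f belongs to H_l with ||f|| <= c : for every g = sum_j b_j l_{x_j} in the
   (dense) span of the kernel functions, |<f, g>| <= c ||g||, where
   <f, g> = sum_j conj(b_j) f(x_j) (reproducing property).  H_l is the set
   of f for which some such c exists, and ||f|| is the least such c. *)
Definition rkhs_norm_le (f : X -> R[i]) (c : R) : Prop :=
  0 <= c /\
  forall (n : nat) (x : 'I_n -> X) (b : 'I_n -> R[i]),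
    `|\sum_(j < n) (b j)^* * f (x j)| ^+ 2 <= (c ^+ 2)%:C * kform x b.

Definition in_rkhs (f : X -> R[i]) : Prop := exists c : R, rkhs_norm_le f c.

Definition mult_norm_le (phi : X -> R[i]) (C : R) : Prop :=
  forall (f : X -> R[i]) (c : R),
    rkhs_norm_le f c -> rkhs_norm_le (fun z => phi z * f z) (C * c).

(* d_l(z,w) = sqrt(1 - |<hat l_z, hat l_w>|^2), with
   <l_z, l_w> = l(w,z) and ||l_z|| = sqrt(l(z,z)). *)
Definition kdist (z w : X) : R[i] :=
  sqrtC (1 - (`|l w z| / (sqrtC (l z z) * sqrtC (l w w))) ^+ 2).

Definition multiplier_separation_property : Prop :=
  forall delta : R, 0 < delta ->
  exists eps : R, 0 < eps /\
    forall lam mu : X, lam <> mu -> delta%:C < kdist lam mu ->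
    exists phi : X -> R[i],
      mult_norm_le phi 1 /\ phi lam = eps%:C /\ phi mu = 0.

Definition weakly_separated (lam : nat -> X) : Prop :=
  exists eps : R, 0 < eps /\
    forall i j : nat, i <> j -> eps%:C <= kdist (lam i) (lam j).

(* The points mu_0 (playing the role of mu_1), mu_1 .. mu_m of an
   (m+1)-point set; the vector  hat l_{mu_0} - sum_k c_k hat l_{mu_k}
   is the combination with these points and coefficients below. *)
Definition pts (m : nat) (mu0 : X) (mu : 'I_m -> X) (j : 'I_m.+1) : X :=
  if unlift ord0 j is Some k then mu k else mu0.

Definition diffcoef (m : nat) (mu0 : X) (mu : 'I_m -> X) (c : 'I_m -> R[i])
  (j : 'I_m.+1) : R[i] :=
  if unlift ord0 j is Some k then - (c k / sqrtC (l (mu k) (mu k)))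
  else 1 / sqrtC (l mu0 mu0).

(* n-weak separation (n >= 2): there is eps > 0 such that for every n-point
   subset {mu_1,...,mu_n} of the sequence (any labelling),
   dist(hat l_{mu_1}, span{hat l_{mu_2},...,hat l_{mu_n}}) >= eps,
   i.e. || hat l_{mu_1} - sum_k c_k hat l_{mu_k} || >= eps for all c. *)
Definition n_weakly_separated (lam : nat -> X) (n : nat) : Prop :=
  exists eps : R, 0 < eps /\
    forall (i0 : nat) (idx : 'I_n.-1 -> nat),
      injective (fun k => lam (idx k)) ->
      (forall k, lam (idx k) <> lam i0) ->
      forall c : 'I_n.-1 -> R[i],
        eps%:C <= combo_norm (pts (lam i0) (fun k => lam (idx k)))
                             (diffcoef (lam i0) (fun k => lam (idx k)) c).

Definition automatic_separation_property : Prop :=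
  forall lam : nat -> X, weakly_separated lam ->
    forall n : nat, (3 <= n)%N -> n_weakly_separated lam n.

End RKHS.

(* Main.v *)
Require Import Defs.
From HB Require Import structures.
From mathcomp Require Import all_boot all_order all_algebra.
From mathcomp Require Import reals complex.
From mathcomp Require Import ring lra.
Import Order.TTheory GRing.Theory Num.Theory.
Local Open Scope ring_scope.
Local Open Scope complex_scope.
Set Implicit Arguments. Unset Strict Implicit.

Lemma cs_real (R : realType) (a k p q : R) : 0 <= a ->
  (forall u v : R, 0 <= (u^+2+v^+2)*a + 2*u *  p - 2*v*q + k) ->
  p^+2+q^+2 <= a*k.
Proof.
move=> a0 H.
have k0 : 0 <= k by have := H 0 0; lra.
set N := p^+2+q^+2.
have N0 : 0 <= N by rewrite /N; nra.
have [ap|] := ltP 0 a.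
  have := H (-p/a) (q/a).
  have -> : (((- p / a) ^+ 2 + (q / a) ^+ 2) * a + 2 * (- p / a) * p - 2 * (q / a) * q + k)
     = k - N / a by rewrite /N; field; rewrite gt_eqF.
  rewrite subr_ge0 ler_pdivrMr // => h; by rewrite mulrC.
move=> a0'; have a00 : a = 0 by apply/le_anti; rewrite a0 a0'.
subst a; rewrite mul0r.
have [Np|] := ltP 0 N; last by [].
have := H (-(k+1)* p/N) ((k+1)*q/N).
have -> : (((- (k + 1) * p / N) ^+ 2 + ((k + 1) * q / N) ^+ 2) * 0 + 2 * (- (k + 1) * p / N) * p -
 2 * ((k + 1) * q / N) * q + k) = - k - 2.
  by rewrite mulr0 add0r /N; field; rewrite gt_eqF.
move=> h; exfalso; lra.
Qed.

Lemma cs_cplx (R : realType) (A K s s' : R[i]) : 0 <= A ->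
  (forall t, 0 <= t^* * t * A + t^* * s' + t * s + K) -> `|s|^+2 <= A * K.
Proof.
case: A => a a2; case: K => k k2; case: s => p q; case: s' => p' q'.
rewrite lecE /= => /andP[/eqP a20 a0] H.
have H0 := H 0; have H1 := H 1; have Hi := H 'i.
move: H0 H1 Hi; rewrite !lecE /=.
move=> /andP[/eqP e0 h0] /andP[/eqP e1 h1] /andP[/eqP ei hi].
subst a2.
have k20 : k2 = 0 by lra.
have qq : q' = - q by lra.
have pp : p' = p by lra.
subst k2 q' p'.

apply/andP; split; first by apply/eqP; ring.
rewrite -expr2 sqr_sqrtr; last by nra.
have -> : a * k - 0 * 0 = a * k by ring.
have -> : p ^+ 2 + q ^+ 2 - 0 * 0 = p ^+ 2 + q ^+ 2 by ring.
apply: cs_real => // u v.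
have := H (u +i* v); rewrite lecE /= => /andP[_ h].
lra.
Qed.

Section S.
Variables (R : realType) (X : Type) (l : X -> X -> R[i]).

Definition ccons n (t : R[i]) (a : 'I_n -> R[i]) (j : 'I_n.+1) : R[i] :=
  if unlift ord0 j is Some k then a k else t.

Lemma pts0 n z0 (y : 'I_n -> X) : pts z0 y ord0 = z0.
Proof. by rewrite /pts unlift_none. Qed.
Lemma ptsS n z0 (y : 'I_n -> X) k : pts z0 y (lift ord0 k) = y k.
Proof. by rewrite /pts liftK. Qed.
Lemma ccons0 n t (a : 'I_n -> R[i]) : ccons t a ord0 = t.
Proof. by rewrite /ccons unlift_none. Qed.
Lemma cconsS n t (a : 'I_n -> R[i]) k : ccons t a (lift ord0 k) = a k.
Proof. by rewrite /ccons liftK. Qed.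

Lemma kform_cons n z0 (y : 'I_n -> X) a t :
  kform l (pts z0 y) (ccons t a) =
  t^* * t * l z0 z0 + t^* * (\sum_j a j * l z0 (y j))
  + t * (\sum_i (a i)^* * l (y i) z0) + kform l y a.
Proof.
rewrite /kform big_ord_recl pts0 ccons0 big_ord_recl pts0 ccons0.
under eq_bigr do rewrite ptsS cconsS.
under [X in _ + X = _]eq_bigr do rewrite ptsS cconsS big_ord_recl pts0 ccons0.
under [X in _ + X = _]eq_bigr do under eq_bigr do rewrite ptsS cconsS.
rewrite big_split /= !mulr_sumr -!addrA; congr (_ + _).
congr (_ + _); first by apply: eq_bigr => i _; ring.
congr (_ + _); by apply: eq_bigr => i _; ring.
Qed.

Lemma diag_ge0 (Hk : is_kernel l) z : 0 <= l z z.
Proof.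
have := Hk.1 1%N (fun _ => z) (fun _ => 1).
by rewrite /kform !big_ord1 rmorph1 !mul1r.
Qed.

Lemma kern_cs (Hk : is_kernel l) z0 n (y : 'I_n -> X) a :
  `|\sum_i (a i)^* * l (y i) z0|^+2 <= l z0 z0 * kform l y a.
Proof.
apply: (cs_cplx (s' := \sum_j a j * l z0 (y j))); first exact: diag_ge0.
by move=> t; rewrite -kform_cons; exact: Hk.1.
Qed.

Lemma diag_gt0 (Hk : is_kernel l) z : 0 < l z z.
Proof.
have [w Hw] := Hk.2 z.
rewrite lt_def diag_ge0 // andbT; apply/negP => /eqP h.
have := kern_cs Hk z (fun _ : 'I_1 => w) (fun _ => 1).
rewrite big_ord1 h mul0r rmorph1 mul1r -normrX normr_le0 sqrf_eq0.
by rewrite (negbTE Hw).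
Qed.

Lemma sqrt_diag (Hk : is_kernel l) z :
  ((Num.sqrt (complex.Re (l z z))) ^+ 2)%:C = l z z.
Proof.
have h := diag_ge0 Hk z.
rewrite sqr_sqrtr; first by rewrite RRe_real // ger0_real.
by move: h; rewrite lecE => /andP[].
Qed.

Lemma kern_fun (Hk : is_kernel l) z0 :
  rkhs_norm_le l (fun z => l z z0) (Num.sqrt (complex.Re (l z0 z0))).
Proof.
split; first exact: sqrtr_ge0.
move=> n x b; rewrite sqrt_diag //; exact: kern_cs.
Qed.

Lemma rk_ext f g c : (forall z, f z = g z) -> rkhs_norm_le l f c -> rkhs_norm_le l g c.
Proof. by move=> e [c0 H]; split=> // n x b; under eq_bigr do rewrite -e; exact: H. Qed.

Lemma mult1 : mult_norm_le l (fun _ => 1) 1.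
Proof. move=> f c H; rewrite mul1r; apply: rk_ext H => z; by rewrite mul1r. Qed.

Lemma multM phi psi : mult_norm_le l phi 1 -> mult_norm_le l psi 1 ->
  mult_norm_le l (fun z => phi z * psi z) 1.
Proof.
move=> Hp Hq f c H; have := Hp _ _ (Hq _ _ H); rewrite !mul1r.
by apply: rk_ext => z; rewrite mulrA.
Qed.

Lemma prod_exists (z0 : X) (e : R) (P : X -> Prop) :
  (forall y, P y -> exists phi, mult_norm_le l phi 1 /\ phi z0 = e%:C /\ phi y = 0) ->
  forall m (y : 'I_m -> X), (forall k, P (y k)) ->
  exists phi, mult_norm_le l phi 1 /\ phi z0 = (e^+m)%:C /\ forall k, phi (y k) = 0.
Proof.
move=> Hs; elim=> [|m IH] y Hy.
  exists (fun _ => 1); split; first exact: mult1.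
  by split; [rewrite expr0 | case].
have [phi1 [H1 [H1a H1b]]] := IH (fun k => y (lift ord0 k)) (fun k => Hy _).
have [phi2 [H2 [H2a H2b]]] := Hs _ (Hy ord0).
exists (fun z => phi2 z * phi1 z); split; first exact: multM.
split; first by rewrite H2a H1a exprS rmorphM.
move=> k; case: (unliftP ord0 k) => [k'|] ->.
  by rewrite H1b mulr0.
by rewrite H2b mul0r.
Qed.

Lemma diffcoef0 n z0 (y : 'I_n -> X) c :
  diffcoef l z0 y c ord0 = 1 / sqrtC (l z0 z0).
Proof. by rewrite /diffcoef unlift_none. Qed.

End S.

Theorem proposition5p3 (R : realType) (X : Type) (l : X -> X -> R[i]) :
  is_kernel l -> multiplier_separation_property l ->
  automatic_separation_property l.
Proof.
move=> Hk Hms lam [e0 [e0p Hws]] n n3.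
have [eps [epsp Hsep]] := Hms (e0/2) (divr_gt0 e0p (ltr0Sn _ _)).
exists (eps ^+ n.-1); split; first exact: exprn_gt0.
move=> i0 idx Hinj Hd c.
set z0 := lam i0; set y := fun k => lam (idx k).
have HP : forall k, y k <> z0 /\ (e0/2)%:C < kdist l z0 (y k).
  move=> k; split; first exact: Hd k.
  have hne : idx k <> i0 by move=> e; apply: (Hd k); rewrite /y /= e.
  apply: lt_le_trans (Hws _ _ (nesym hne)); rewrite ltcR; lra.
have [phi [Hphi [Hphi0 Hphiy]]] :=
  @prod_exists R X l z0 eps (fun w => w <> z0 /\ (e0/2)%:C < kdist l z0 w)
   (fun w Hw => Hsep z0 w (nesym Hw.1) Hw.2) n.-1 y HP.
have Hf := kern_fun Hk z0.
have := (Hphi _ _ Hf).2 n.-1.+1 (pts z0 y) (diffcoef l z0 y c).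
rewrite big_ord_recl big1; last by move=> k _; rewrite ptsS Hphiy mul0r mulr0.
rewrite addr0 pts0 diffcoef0 !mul1r sqrt_diag // Hphi0.
set L := l z0 z0; set K := kform l _ _; set E := eps ^+ n.-1.
have Lp : 0 < L := diag_gt0 Hk z0.
have E0 : 0 <= E%:C by rewrite ler0c exprn_ge0 // ltW.
have K0 : 0 <= K := Hk.1 _ _ _.
move=> h0; have h : `|(sqrtC L)^-1^* * (E%:C * L)| ^+ 2 <= L * K := h0; move: h; clear h0.
rewrite (@normrM _ ((sqrtC L)^-1^*)).
rewrite exprMn normcJ normfV exprVn -normrX sqrtCK (ger0_norm (ltW Lp)).
rewrite normrM exprMn (ger0_norm E0) (ger0_norm (ltW Lp)).
have -> : L^-1 * (E%:C ^+ 2 * L ^+ 2) = L * E%:C^+2 by field; rewrite gt_eqF.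
rewrite ler_pM2l // => h.
rewrite /combo_norm -(sqrCK E0) ler_sqrtC // nnegrE // exprn_ge0 //.
Qed.
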